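(* Let $(X_i)_{i\in I}$ be any family of objects of $\mathsf{RSRel}$. Then $P\left(\prod_{i\in I}X_i\right)=\prod_{i\in I}PX_i$, where the product in $\mathsf{RSRel}$ is the cartesian product of carriers with $(x_i)_i\sim(x'_i)_i$ iff $x_i\sim x'_i$ for all $i$, and the product in $\mathsf{Met}$ is the cartesian product of carriers with metric $d((x_i)_i,(x'_i)_i)=\sup_{i\in I}d_{PX_i}(x_i,x'_i)$.
   Context: $\mathsf{RSRel}$: sets with a reflexive symmetric relation. $\mathsf{Met}$: extended pseudo-metric spaces (distances in $[0,\infty]$). For $X\in\mathsf{RSRel}$, $PX$ is $|X|$ with the path metric: $d(x,x')$ is the least $k$ such that there is a chain $x=x_0\sim x_1\sim\dots\sim x_k=x'$, or $\infty$ if no such chain exists. *)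

(* Defs.v *)
From HB Require Import structures.
From mathcomp Require Import all_boot all_order all_algebra.
From mathcomp Require Import all_classical all_reals ereal.
Set Implicit Arguments. Unset Strict Implicit. Unset Printing Implicit Defensive.
Import Order.TTheory GRing.Theory Num.Theory.
Local Open Scope classical_set_scope.
Local Open Scope ereal_scope.

Record rsrel := RSRel {
  carrier : Type;
  rel : carrier -> carrier -> Prop;
  rel_refl : forall x, rel x x;
  rel_sym : forall x y, rel x y -> rel y x }.

Definition rsprod_rel (I : Type) (X : I -> rsrel)
  (x y : forall i, carrier (X i)) : Prop := forall i, rel (x i) (y i).
Arguments rsprod_rel : clear implicits.

Lemma rsprod_refl (I : Type) (X : I -> rsrel) x : rsprod_rel I X x x.
Proof. by move=> i; apply: rel_refl. Qed.

Lemma rsprod_sym (I : Type) (X : I -> rsrel) x y :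
  rsprod_rel I X x y -> rsprod_rel I X y x.
Proof. by move=> H i; apply: rel_sym. Qed.

Arguments rsprod_refl : clear implicits.
Arguments rsprod_sym : clear implicits.

Definition rsprod (I : Type) (X : I -> rsrel) : rsrel :=
  @RSRel (forall i, carrier (X i)) (rsprod_rel I X) (rsprod_refl I X) (rsprod_sym I X).

Definition chain (X : rsrel) (k : nat) (x x' : carrier X) : Prop :=
  exists f : nat -> carrier X,
    f 0%N = x /\ f k = x' /\ forall j, (j < k)%N -> rel (f j) (f j.+1).

(* Path metric of PX: least k admitting a chain (infimum of the set of such k),
   +oo when no chain exists (ereal_inf of the empty set is +oo). *)
Definition path_dist (R : realType) (X : rsrel) (x x' : carrier X) : \bar R :=
  ereal_inf [set (k%:R)%:E | k in [set k : nat | chain k x x']].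

(* Supremum in [0, +oo] of a family of distances (the sup-metric of the
   product in Met); 0 is included so that the empty product gets distance 0. *)
Definition sup_dist (R : realType) (I : Type) (d : I -> \bar R) : \bar R :=
  ereal_sup ([set 0] `|` range d).

(* Main.v *)
Require Import Defs.
From mathcomp Require Import all_boot all_order all_algebra.
From mathcomp Require Import all_classical all_reals ereal.
Import Order.TTheory GRing.Theory Num.Theory.
Local Open Scope classical_set_scope.
Local Open Scope ereal_scope.

Lemma chain_mono (X : rsrel) k m (x y : carrier X) :
  chain k x y -> (k <= m)%N -> chain m x y.
Proof.
move=> [f [f0 [fk fr]]] km.
exists (fun j => f (minn j k)); split; first by rewrite min0n.
split; first by rewrite (minn_idPr km).
move=> j jm /=; case: (ltnP j k) => jk.
  rewrite (minn_idPl jk); exact: fr.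
rewrite (minn_idPr (leqW jk)); exact: rel_refl.
Qed.

Lemma pd_le (R : realType) (X : rsrel) (x y : carrier X) n :
  chain n x y -> path_dist R x y <= (n%:R)%:E.
Proof. by move=> h; apply: ereal_inf_lbound; exists n. Qed.

Lemma pd_lt (R : realType) (X : rsrel) (x y : carrier X) n :
  path_dist R x y < (n.+1%:R)%:E -> chain n x y.
Proof.
move=> h; apply: contrapT => nc; move: h; apply/negP; rewrite -leNgt.
apply: le_ereal_inf_tmp => _ [k hk <-]; rewrite lee_fin ler_nat.
case: (ltnP n k) => // kn; exfalso; apply: nc; exact: chain_mono hk kn.
Qed.

Lemma pd_ge0 (R : realType) (X : rsrel) (x y : carrier X) :
  0 <= path_dist R x y.
Proof. by apply: le_ereal_inf_tmp => _ [k _ <-]; rewrite lee_fin. Qed.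

Theorem lemma3 (R : realType) (I : Type) (X : I -> rsrel)
  (x x' : carrier (rsprod X)) :
  path_dist R x x' = sup_dist (fun i => path_dist R (x i) (x' i)).
Proof.
have S0 : 0 <= sup_dist (fun i => path_dist R (x i) (x' i)).
  by apply: ereal_sup_ubound; left.
apply/eqP; rewrite eq_le; apply/andP; split; last first.
  apply: ge_ereal_sup => _ [->|[i _ <-]]; first exact: pd_ge0.
  apply: le_ereal_inf_tmp => _ [k [f [f0 [fk fr]]] <-].
  apply: pd_le; exists (fun j => f j i); split; first by rewrite f0.
  by split; [rewrite fk | move=> j jk; exact: fr].
set S := sup_dist _ in S0 *.
case ES : S S0 => [r| |] // r0; last by rewrite leey.
rewrite lee_fin in r0.
have [tl tr] := andP (truncn_itv r0).
set n := Num.trunc r in tl tr.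
have ci : forall i, chain n (x i) (x' i).
  move=> i; apply: pd_lt; apply: (@le_lt_trans _ _ S).
    by apply: ereal_sup_ubound; right; exists i.
  by rewrite ES lte_fin.
have [g hg] : exists g : forall i, nat -> carrier (X i),
    forall i, g i 0%N = x i /\ g i n = x' i /\
      forall j, (j < n)%N -> Defs.rel (g i j) (g i j.+1).
  have := fun i => cid (ci i).
  move=> h; exists (fun i => proj1_sig (h i)) => i; exact: proj2_sig (h i).
apply: (@le_trans _ _ (n%:R)%:E); last by rewrite lee_fin.
pose F : nat -> carrier (rsprod X) := fun j => fun i => g i j.
apply: pd_le; exists F; split.
  by apply: functional_extensionality_dep => i; case: (hg i).
split; first by apply: functional_extensionality_dep => i; case: (hg i) => _ [].
by move=> j jn i; case: (hg i) => _ [_]; apply.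
Qed.
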